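(* Let $G=(V,E)$ be an undirected graph with $m$ edges, positive capacities $u_e$, and maximum $s$-$t$ flow value $F^*$. Let $0<\epsilon<1/2$, let $w\in\mathbb{R}^E$ with $w_e>0$ for all $e$, write $|w|_1=\sum_e w_e$, and set $r_e=\frac{1}{u_e^2}\big(w_e+\frac{\epsilon|w|_1}{3m}\big)$. Then: (1) If $0<F\le F^*$ and $\tilde f$ is an $s$-$t$ flow of value $F$ with $\mathcal{E}_r(\tilde f)\le(1+\epsilon/3)\mathcal{E}_r(f)$, where $f$ is the electrical $s$-$t$ flow of value $F$ with respect to $r$, then $\mathcal{E}_r(\tilde f)\le(1+\epsilon)|w|_1$. (2) Every $s$-$t$ flow $g$ with $\mathcal{E}_r(g)\le(1+\epsilon)|w|_1$ satisfies $\sum_e w_e\,\mathrm{cong}_g(e)\le(1+\epsilon)|w|_1$ and $\max_e\mathrm{cong}_g(e)\le 3\sqrt{m/\epsilon}$.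
   Context: Edges are arbitrarily oriented; an $s$-$t$ flow is $f:E\to\mathbb{R}$ conserving flow at all vertices other than $s,t$, with value the net flow out of $s$. $F^*$ is the maximum value of an $s$-$t$ flow with $|f(e)|\le u_e$ for all $e$. $\mathrm{cong}_f(e)=|f(e)|/u_e$. The energy is $\mathcal{E}_r(f)=\sum_e r_e f(e)^2$, and the electrical $s$-$t$ flow of value $F$ is the $s$-$t$ flow of value $F$ minimizing $\mathcal{E}_r$. *)

(* Defs.v *)
(* R is an arbitrary real closed field (needed for Num.sqrt). *)
From HB Require Import structures.
From mathcomp Require Import all_boot all_order all_algebra.
Set Implicit Arguments. Unset Strict Implicit. Unset Printing Implicit Defensive.
Import Order.TTheory GRing.Theory Num.Theory.
Local Open Scope ring_scope.

(* A graph on vertex type V with edge type E; each edge e has an arbitrary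
   orientation src e -> dst e (the graph is undirected; multi-edges allowed). *)
Section Flows.
Variables (R : rcfType) (V E : finType) (src dst : E -> V).

Definition net_out (f : E -> R) (v : V) : R :=
  \sum_(e | src e == v) f e - \sum_(e | dst e == v) f e.

Definition is_st_flow (s t : V) (f : E -> R) : Prop :=
  forall v, v != s -> v != t -> net_out f v = 0.

Definition flow_value (s : V) (f : E -> R) : R := net_out f s.

Definition feasible (u : E -> R) (f : E -> R) : Prop :=
  forall e, `|f e| <= u e.

Definition is_max_flow_value (u : E -> R) (s t : V) (Fstar : R) : Prop :=
  (exists f, is_st_flow s t f /\ feasible u f /\ flow_value s f = Fstar) /\
  (forall f, is_st_flow s t f -> feasible u f -> flow_value s f <= Fstar).

Definition cong (u : E -> R) (f : E -> R) (e : E) : R := `|f e| / u e.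

Definition energy (r : E -> R) (f : E -> R) : R := \sum_e r e * f e ^+ 2.

Definition is_electrical_flow (r : E -> R) (s t : V) (F : R) (f : E -> R) : Prop :=
  is_st_flow s t f /\ flow_value s f = F /\
  (forall g, is_st_flow s t g -> flow_value s g = F -> energy r f <= energy r g).

End Flows.

(* Main.v *)
Require Import Defs.
From HB Require Import structures.
From mathcomp Require Import all_boot all_order all_algebra.
Import Order.TTheory GRing.Theory Num.Theory.
Local Open Scope ring_scope.

Lemma sq_le_1p (R : rcfType) (x : R) : 0 <= x -> x <= 1 ->
  (1 + x) * (1 + x) <= 1 + x * 3%:R.
Proof.
move=> x0 x1.
rewrite mulrDl mul1r -addrA lerD2l.
have -> : x * 3%:R = x + x * 2%:R.
  by rewrite !mulr_natr -mulrS.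
rewrite lerD2l ler_wpM2l //.
by rewrite [2%:R]mulr2n lerD2l.
Qed.

Lemma net_out_scale (R : rcfType) (V E : finType) (src dst : E -> V)
  (k : R) (f : E -> R) v :
  net_out src dst (fun e => k * f e) v = k * net_out src dst f v.
Proof. by rewrite /net_out mulrBr !mulr_sumr. Qed.

Lemma amgm (R : rcfType) (w c : R) : 0 <= w ->
  (w * c) *+ 2 <= w + w * c ^+ 2.
Proof.
move=> w0.
have h : 0 <= w * (c - 1) ^+ 2 by rewrite mulr_ge0 // sqr_ge0.
rewrite sqrrB1 mulrDr mulrBr mulr1 in h.
rewrite -subr_ge0.
have -> : w + w * c ^+ 2 - w * c *+ 2 = w * c ^+ 2 - w * c *+ 2 + w.
  by rewrite [w + _]addrC addrAC.
by rewrite -mulrnAr.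
Qed.

Theorem mainTheorem9 (R : rcfType) (V E : finType) (src dst : E -> V)
  (s t : V) (u w : E -> R) (Fstar eps : R) :
  s != t ->
  (forall e, 0 < u e) ->
  is_max_flow_value src dst u s t Fstar ->
  0 < eps -> eps < 1 / 2 ->
  (forall e, 0 < w e) ->
  let m := #|E| in
  let w1 := \sum_e w e in
  let r := fun e => (w e + eps * w1 / (3 * m%:R)) / (u e ^+ 2) in
  (forall (F : R) (f ft : E -> R),
      0 < F -> F <= Fstar ->
      is_electrical_flow src dst r s t F f ->
      is_st_flow src dst s t ft -> flow_value src dst s ft = F ->
      energy r ft <= (1 + eps / 3) * energy r f ->
      energy r ft <= (1 + eps) * w1)
  /\
  (forall g : E -> R,
      is_st_flow src dst s t g ->
      energy r g <= (1 + eps) * w1 ->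
      \sum_e w e * cong u g e <= (1 + eps) * w1 /\
      \big[Num.max/0]_e cong u g e <= 3 * Num.sqrt (m%:R / eps)).
Proof.
move=> _ u0 [[fs [fsF [fsfeas fsv]]] _] eps0 eps12 w0. intros m w1 r.
set a := eps * w1 / (3 * m%:R).
have w10 : 0 <= w1 by apply: sumr_ge0 => e _; apply: ltW.
have a0 : 0 <= a by rewrite /a divr_ge0 ?mulr_ge0 ?ler0n // ltW.
have ra e : r e * u e ^+ 2 = w e + a.
  by rewrite /r divfK // expf_neq0 // gt_eqF.
have r0 e : 0 <= r e.
  by rewrite /r divr_ge0 ?sqr_ge0 // addr_ge0 // ltW.
have am : a * m%:R <= eps * w1 / 3.
  case: (posnP m) => [->|mp]; first by rewrite mulr0 divr_ge0 ?mulr_ge0 // ltW.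
  rewrite /a invfM mulrA mulfVK // pnatr_eq0 -lt0n //.
have eps1 : eps <= 1.
  apply: ltW; apply: (lt_le_trans eps12).
  by rewrite ler_pdivrMr // mul1r ler1n.
split.
- move=> F f ft F0 FF [fF [fv fmin]] ftF ftv hft.
  have Fs0 : 0 < Fstar by apply: lt_le_trans FF.
  set k := F / Fstar.
  have k0 : 0 <= k by rewrite divr_ge0 ?ltW.
  have k1 : k <= 1 by rewrite ler_pdivrMr // mul1r.
  pose g := fun e => k * fs e.
  have gF : is_st_flow src dst s t g.
    by move=> v vs vt; rewrite /g net_out_scale fsF // mulr0.
  have gv : flow_value src dst s g = F.
    by rewrite /flow_value /g net_out_scale -/(flow_value _ _ _ _) fsv divfK // gt_eqF.
  have Eg : energy r g <= (1 + eps / 3) * w1.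
    apply: (le_trans (y := \sum_e (w e + a))).
      apply: ler_sum => e _; rewrite -ra ler_wpM2l //.
      rewrite -real_normK ?num_real // -[u e ^+ 2]real_normK ?num_real //.
      rewrite !expr2; apply: ler_pM; rewrite ?normr_ge0 //.
        rewrite /g normrM (ger0_norm k0); apply: (le_trans (y := 1 * `|fs e|)).
          by rewrite ler_wpM2r.
        by rewrite mul1r (le_trans (fsfeas e)) // ler_norm.
      rewrite /g normrM (ger0_norm k0); apply: (le_trans (y := 1 * `|fs e|)).
        by rewrite ler_wpM2r.
      by rewrite mul1r (le_trans (fsfeas e)) // ler_norm.
    rewrite big_split /= sumr_const -/w1 (_ : a *+ _ = a * m%:R); last by rewrite mulr_natr.
    by rewrite mulrDl mul1r lerD2l [eps / 3 * w1]mulrAC.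
  have e30 : 0 <= eps / 3 by rewrite divr_ge0 // ltW.
  have e31 : eps / 3 <= 1.
    rewrite ler_pdivrMr // mul1r (le_trans eps1) // ler1n //.
  apply: (le_trans hft).
  apply: (le_trans (y := (1 + eps / 3) * ((1 + eps / 3) * w1))).
    rewrite ler_wpM2l ?addr_ge0 //; apply: le_trans (fmin g gF gv) Eg.
  rewrite mulrA ler_wpM2r //; apply: le_trans; first exact: (sq_le_1p _ _ e30 e31).
  by rewrite divfK // pnatr_eq0.
move=> g _ hE.
have key e : r e * g e ^+ 2 = (w e + a) * cong u g e ^+ 2.
  rewrite /r /cong expr_div_n real_normK ?num_real // -mulrA; congr (_ * _).
  by rewrite mulrC.
have cg0 e : 0 <= cong u g e by rewrite /cong divr_ge0 // ltW.
split.
- suff h : (\sum_e w e * cong u g e) *+ 2 <= ((1 + eps) * w1) *+ 2 by move: h; rewrite lerMn2r.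
  rewrite -sumrMnl.
  apply: (le_trans (y := \sum_e (w e + w e * cong u g e ^+ 2))).
    by apply: ler_sum => e _; apply: amgm; apply: ltW.
  rewrite big_split /= -/w1.
  apply: (le_trans (y := w1 + (1 + eps) * w1)).
    rewrite lerD2l; apply: le_trans hE; apply: ler_sum => e _.
    rewrite key ler_wpM2r ?sqr_ge0 // lerDl //.
  by rewrite mulr2n lerD2r mulrDl mul1r lerDl mulr_ge0 // ltW.
- apply: bigmax_le; first by rewrite mulr_ge0 ?sqrtr_ge0.
  move=> e _.
  set c := cong u g e.
  have mp : (0 < m)%N by apply/card_gt0P; exists e.
  have w1p : 0 < w1.
    rewrite /w1 (bigD1 e) //=; apply: (lt_le_trans (w0 e)).
    by rewrite lerDl sumr_ge0 // => i _; apply: ltW.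
  have hc : a * c ^+ 2 <= 3 * w1.
    apply: (le_trans (y := (w e + a) * c ^+ 2)).
      by rewrite ler_wpM2r ?sqr_ge0 // lerDr ltW.
    rewrite -key; apply: (le_trans (y := energy r g)).
      rewrite /energy (bigD1 e) //= lerDl sumr_ge0 // => i _.
      by rewrite mulr_ge0 ?r0 ?sqr_ge0.
    apply: (le_trans hE); rewrite ler_wpM2r //.
    rewrite (_ : 3 = 1 + 2%:R :> R); last by reflexivity.
    by rewrite lerD2l (le_trans eps1) // ler1n.
  have m0 : 0 < 3 * m%:R :> R by rewrite mulr_gt0 // ltr0n.
  rewrite /a mulrAC ler_pdivrMr // in hc.
  have epsm : 0 <= m%:R / eps by rewrite divr_ge0 ?ler0n // ltW.
  rewrite -ler_sqr; last 2 first.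
  - by rewrite nnegrE cg0.
  - by rewrite nnegrE mulr_ge0 ?sqrtr_ge0.
  rewrite [(3 * _) ^+ 2]exprMn sqr_sqrtr // mulrA ler_pdivlMr //.
  rewrite -(ler_pM2r w1p).
  have e1 : eps * w1 * c ^+ 2 = c ^+ 2 * eps * w1 by rewrite mulrC mulrA.
  have e2 : 3 * w1 * (3 * m%:R) = 3 ^+ 2 * m%:R * w1 :> R.
    by rewrite mulrAC [3 * (3 * _)]mulrA expr2.
  by rewrite -e1 -e2.
Qed.
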